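(* Let $A$ be a normed algebra, let $S\subseteq A$ be zp-dense in $A$, and let $c\in A$ factorize through zero products in $S$. If $X$ is a normed space and $V:A\times A\to X$ is a bounded bilinear map having the product property at $c$, then $V$ has the product property at zero, i.e. $V(x,y)=0$ whenever $x,y\in A$ satisfy $xy=0$.
   Context: A subset $S$ of a normed algebra $A$ is zp-dense if (1) the norm closure of $\operatorname{span}(S)$ is $A$; (2) for every $u\in S$ there is $v\in S$ with $uv=0$; (3) any $x,y\in A$ with $xy=0$ can be written as norm-convergent series $x=\sum_n\alpha_nu_n$, $y=\sum_n\beta_nv_n$ with scalars $\alpha_n,\beta_n$, $u_i,v_j\in S$ and $u_iv_j=0$ for all $i,j$. For $x,y\in A$ with $xy=0$, $c$ factorizes through $(x,y)$ if there are $a,b\in A$ with $ay=0$, $xb=0$, $ab=c$; $c$ factorizes through zero products in $S$ if it factorizes through every $(x,y)$ with $x,y\in S$, $xy=0$. A bilinear $V:A\times A\to X$ has the product property at $c$ if there is a linear $\varphi:A\to X$ with $V(a,b)=\varphi(ab)$ for all $a,b\in A$ with $ab=c$. *)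

(* Defs.v *)
From HB Require Import structures.
From mathcomp Require Import all_boot all_order all_algebra.
From mathcomp Require Import all_classical all_reals all_analysis.
Set Implicit Arguments. Unset Strict Implicit. Unset Printing Implicit Defensive.
Import Order.TTheory GRing.Theory Num.Theory.
Import numFieldNormedType.Exports.
Local Open Scope classical_set_scope.
Local Open Scope ring_scope.

Definition normed_algebra_mul (K : numFieldType) (A : normedModType K)
  (mul : A -> A -> A) : Prop :=
  [/\ (forall a b c, mul a (mul b c) = mul (mul a b) c),
      (forall (k : K) a b c, mul (k *: a + b) c = k *: mul a c + mul b c),
      (forall (k : K) a b c, mul a (k *: b + c) = k *: mul a b + mul a c)
    & (forall a b, `|mul a b| <= `|a| * `|b|)].

Definition lin_span (K : numFieldType) (A : normedModType K) (S : set A) : set A :=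
  [set x | exists n (a : 'I_n -> K) (u : 'I_n -> A),
      (forall i, S (u i)) /\ x = \sum_(i < n) a i *: u i].

Definition series_to (K : numFieldType) (A : normedModType K)
  (alpha : nat -> K) (u : nat -> A) (x : A) : Prop :=
  (fun N : nat => \sum_(0 <= n < N) alpha n *: u n) @ \oo --> x.

Definition zp_dense (K : numFieldType) (A : normedModType K)
  (mul : A -> A -> A) (S : set A) : Prop :=
  [/\ closure (lin_span S) = setT,
      (forall u, S u -> exists v, S v /\ mul u v = 0)
    & (forall x y, mul x y = 0 ->
        exists (alpha beta : nat -> K) (u v : nat -> A),
          [/\ (forall n, S (u n)), (forall n, S (v n)),
              (forall i j, mul (u i) (v j) = 0),
              series_to alpha u x & series_to beta v y])].

Definition factorizes_through (K : numFieldType) (A : normedModType K)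
  (mul : A -> A -> A) (c x y : A) : Prop :=
  exists a b, [/\ mul a y = 0, mul x b = 0 & mul a b = c].

Definition factorizes_zp (K : numFieldType) (A : normedModType K)
  (mul : A -> A -> A) (S : set A) (c : A) : Prop :=
  forall x y, S x -> S y -> mul x y = 0 -> factorizes_through mul c x y.

Definition bilinear_map (K : numFieldType) (A X : normedModType K)
  (V : A -> A -> X) : Prop :=
  (forall (k : K) a b c, V (k *: a + b) c = k *: V a c + V b c) /\
  (forall (k : K) a b c, V a (k *: b + c) = k *: V a b + V a c).

Definition bounded_bilinear (K : numFieldType) (A X : normedModType K)
  (V : A -> A -> X) : Prop :=
  bilinear_map V /\ exists M : K, forall a b, `|V a b| <= M * `|a| * `|b|.

Definition product_property_at (K : numFieldType) (A X : normedModType K)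
  (mul : A -> A -> A) (V : A -> A -> X) (c : A) : Prop :=
  exists phi : A -> X,
    (forall (k : K) a b, phi (k *: a + b) = k *: phi a + phi b) /\
    (forall a b, mul a b = c -> V a b = phi (mul a b)).

(* Main.v *)
Require Import Defs.
From HB Require Import structures.
From mathcomp Require Import all_boot all_order all_algebra.
From mathcomp Require Import all_classical all_reals all_analysis.
Import Order.TTheory GRing.Theory Num.Theory.
Import numFieldNormedType.Exports.
Local Open Scope classical_set_scope.
Local Open Scope ring_scope.
Set Implicit Arguments. Unset Strict Implicit.

Lemma lin_add (K : numFieldType) (A X : normedModType K) (f : A -> X) :
  (forall (k : K) a b, f (k *: a + b) = k *: f a + f b) ->
  forall a b, f (a + b) = f a + f b.
Proof. by move=> H a b; rewrite -[a in LHS]scale1r H scale1r. Qed.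

Lemma lin_sub (K : numFieldType) (A X : normedModType K) (f : A -> X) :
  (forall (k : K) a b, f (k *: a + b) = k *: f a + f b) ->
  forall a b, f (a - b) = f a - f b.
Proof.
by move=> H a b; rewrite addrC -scaleN1r H scaleN1r addrC.
Qed.

Lemma lin_0 (K : numFieldType) (A X : normedModType K) (f : A -> X) :
  (forall (k : K) a b, f (k *: a + b) = k *: f a + f b) -> f 0 = 0.
Proof.
move=> H; by have := lin_sub H 0 0; rewrite !subrr.
Qed.

Lemma lin_sum0 (K : numFieldType) (A X : normedModType K) (f : A -> X)
  (alpha : nat -> K) (u : nat -> A) :
  (forall (k : K) a b, f (k *: a + b) = k *: f a + f b) ->
  (forall n, f (u n) = 0) ->
  forall N, f (\sum_(0 <= n < N) alpha n *: u n) = 0.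
Proof.
move=> H Hu; elim=> [|N IH]; first by rewrite big_geq // (lin_0 H).
by rewrite big_nat_recr //= addrC H Hu IH scaler0 addr0.
Qed.

Lemma lin_lim0 (K : numFieldType) (A X : normedModType K) (f : A -> X)
  (C : K) (s : nat -> A) (x : A) :
  (forall (k : K) a b, f (k *: a + b) = k *: f a + f b) ->
  (forall a, `|f a| <= C * `|a|) ->
  s @ \oo --> x -> (forall N, f (s N) = 0) -> f x = 0.
Proof.
move=> H Hb Hs H0.
have key : forall N, `|f x| <= C * `|x - s N|.
  by move=> N; rewrite -[f x]subr0 -(H0 N) -(lin_sub H).
apply/eqP; rewrite -normr_eq0; apply/negPn/negP => nz.
have fpos : 0 < `|f x| by rewrite normr_gt0 -normr_eq0.
have [N HN] := filter_ex (cvgr_dist_lt _ _ Hs _ ltr01).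
have C0 : 0 <= C.
  have := key N; case: (eqVneq `|x - s N| 0) => [->|d0].
    by rewrite mulr0 => /(lt_le_trans fpos); rewrite ltxx.
  move=> h; have : 0 <= C * `|x - s N| by apply: le_trans h.
  by rewrite pmulr_lge0 // normr_gt0 -normr_eq0.
set e := `|f x| / (2 * (C + 1)).
have Cp : 0 < C + 1 by rewrite ltr_wpDl.
have ep : 0 < e by rewrite divr_gt0 // mulr_gt0.
have [M HM] := filter_ex (cvgr_dist_lt _ _ Hs _ ep).
have h1 := key M.
have h2 : C * `|x - s M| <= C * e by rewrite ler_wpM2l // ltW // (le_lt_trans (ler_norm _) HM) //.
have h3 : C * e < `|f x|.
  rewrite /e mulrA ltr_pdivrMr ?mulr_gt0 // [C * _]mulrC ltr_pM2l //.
  rewrite mulrDr mulr1 mulr2n mulrDl mul1r -addrA ltr_pwDr //.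
  by apply: ltr_wpDl => //; rewrite addr_gt0.
by have := le_lt_trans (le_trans h1 h2) h3; rewrite ltxx.
Qed.

Theorem mainTheorem4 (K : numFieldType) (A : normedModType K)
  (mul : A -> A -> A) (S : set A) (c : A) (X : normedModType K)
  (V : A -> A -> X) :
  normed_algebra_mul mul ->
  zp_dense mul S ->
  factorizes_zp mul S c ->
  bounded_bilinear V ->
  product_property_at mul V c ->
  forall x y, mul x y = 0 -> V x y = 0.
Proof.
move=> [_ mL mR _] [_ _ Hzp] Hf [[VL VR] [Mb HM]] [phi [_ Hphi]] x y xy0.
have VS : forall u v, S u -> S v -> mul u v = 0 -> V u v = 0.
  move=> u v Su Sv uv0; have [a [b [av0 ub0 abc]]] := Hf u v Su Sv uv0.
  have mLa : forall c' a1 a2, mul (a1 + a2) c' = mul a1 c' + mul a2 c'.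
    by move=> c'; apply: (lin_add (f := mul^~ c')) => k a1 a2; apply: mL.
  have mRa : forall c' a1 a2, mul c' (a1 + a2) = mul c' a1 + mul c' a2.
    by move=> c'; apply: (lin_add (f := mul c')) => k a1 a2; apply: mR.
  have VLa : forall c' a1 a2, V (a1 + a2) c' = V a1 c' + V a2 c'.
    by move=> c'; apply: (lin_add (f := V^~ c')) => k a1 a2; apply: VL.
  have VRa : forall c' a1 a2, V c' (a1 + a2) = V c' a1 + V c' a2.
    by move=> c'; apply: (lin_add (f := V c')) => k a1 a2; apply: VR.
  have e1 : mul (a + u) (b + v) = c.
    by rewrite mLa !mRa av0 ub0 uv0 !addr0.
  have e2 : mul (a + u) b = c by rewrite mLa ub0 addr0.
  have e3 : mul a (b + v) = c by rewrite mRa av0 addr0.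
  have h1 := Hphi _ _ e1; have h2 := Hphi _ _ e2; have h3 := Hphi _ _ e3.
  have h0 := Hphi _ _ abc.
  rewrite e1 in h1; rewrite e2 in h2; rewrite e3 in h3; rewrite abc in h0.
  rewrite VLa !VRa in h1; rewrite VLa in h2; rewrite VRa in h3.
  have Vub : V u b = 0 by apply: (addrI (V a b)); rewrite addr0 h2 h0.
  have Vav : V a v = 0 by apply: (addrI (V a b)); rewrite addr0 h3 h0.
  rewrite Vub Vav h0 addr0 add0r in h1.
  by apply: (addrI (phi c)); rewrite addr0.
have [alpha [beta [u [v [Su Sv uv sx sy]]]]] := Hzp x y xy0.
have s1 : forall N j, V (\sum_(0 <= n < N) alpha n *: u n) (v j) = 0.
  move=> N j; apply: (lin_sum0 (f := V^~ (v j))).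
    by move=> k a1 a2; apply: VL.
  by move=> n; apply: VS.
have s2 : forall N M, V (\sum_(0 <= n < N) alpha n *: u n)
                        (\sum_(0 <= n < M) beta n *: v n) = 0.
  move=> N M; apply: (lin_sum0 (f := V (\sum_(0 <= n < N) alpha n *: u n))).
    by move=> k a1 a2; apply: VR.
  by move=> n; apply: s1.
have s3 : forall M, V x (\sum_(0 <= n < M) beta n *: v n) = 0.
  move=> M; apply: (lin_lim0 (f := V^~ (\sum_(0 <= n < M) beta n *: v n))
    (C := Mb * `|\sum_(0 <= n < M) beta n *: v n|) _ _ sx).
  - by move=> k a1 a2; apply: VL.
  - by move=> a; rewrite mulrAC; apply: HM.
  - by move=> N; apply: s2.
apply: (lin_lim0 (f := V x) (C := Mb * `|x|) _ _ sy).
- by move=> k a1 a2; apply: VR.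
- by move=> b; apply: HM.
- exact: s3.
Qed.
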